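(* Let $c>0$, $\lambda>0$ and, for $t>0$ and $\mathbf{x}\in\mathbb{R}^3$ with $\|\mathbf{x}\|<ct$, let $$u(\mathbf{x},t)=\frac{e^{-\lambda t}}{\pi}\left(\frac{\lambda}{2c}\right)^2\frac{1}{\sqrt{c^2t^2-\|\mathbf{x}\|^2}}\,I_1\!\left(\frac{\lambda}{c}\sqrt{c^2t^2-\|\mathbf{x}\|^2}\right),$$ where $I_1(z)=\sum_{k\ge0}(z/2)^{2k+1}/(k!(k+1)!)$. Then $u$ satisfies the three-dimensional telegraph equation $$\left(\frac{\partial^2}{\partial t^2}+2\lambda\frac{\partial}{\partial t}-c^2\Delta\right)u(\mathbf{x},t)=0,\qquad \Delta=\sum_{j=1}^3\frac{\partial^2}{\partial x_j^2},$$ in the region $\{(\mathbf{x},t):t>0,\ \|\mathbf{x}\|<ct\}$.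
   Context: The function $u$ is (known to be) the density of $P\{\mathbf{U}_3(t)\in d\mathbf{x},\ \cup_{k\ge1}\{N(t)=2k+1\}\}$ for a random flight $\mathbf{U}_3(t)$ in $\mathbb{R}^3$ with speed $c$ whose changes of direction occur only at the even-numbered events of a homogeneous Poisson process $N(t)$ of rate $\lambda$. *)

(* Defs.v *)
From Stdlib Require Import Reals Factorial.
From Coquelicot Require Import Coquelicot.
Open Scope R_scope.

Definition bessel_I1 (z : R) : R :=
  Series (fun k : nat => (z / 2) ^ (2 * k + 1) / (INR (fact k) * INR (fact (S k)))).

Definition norm3 (x1 x2 x3 : R) : R := sqrt (x1 ^ 2 + x2 ^ 2 + x3 ^ 2).

(* The function u(x,t); meaningful on t>0, ||x|| < c t *)
Definition tg_u (c lam x1 x2 x3 t : R) : R :=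
  exp (- lam * t) / PI * (lam / (2 * c)) ^ 2
  * / sqrt (c ^ 2 * t ^ 2 - norm3 x1 x2 x3 ^ 2)
  * bessel_I1 (lam / c * sqrt (c ^ 2 * t ^ 2 - norm3 x1 x2 x3 ^ 2)).

Definition tg_dt (c lam x1 x2 x3 t : R) : R := Derive (fun s => tg_u c lam x1 x2 x3 s) t.
Definition tg_dtt (c lam x1 x2 x3 t : R) : R := Derive (fun s => tg_dt c lam x1 x2 x3 s) t.
Definition tg_d1 (c lam x1 x2 x3 t : R) : R := Derive (fun y => tg_u c lam y x2 x3 t) x1.
Definition tg_d11 (c lam x1 x2 x3 t : R) : R := Derive (fun y => tg_d1 c lam y x2 x3 t) x1.
Definition tg_d2 (c lam x1 x2 x3 t : R) : R := Derive (fun y => tg_u c lam x1 y x3 t) x2.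
Definition tg_d22 (c lam x1 x2 x3 t : R) : R := Derive (fun y => tg_d2 c lam x1 y x3 t) x2.
Definition tg_d3 (c lam x1 x2 x3 t : R) : R := Derive (fun y => tg_u c lam x1 x2 y t) x3.
Definition tg_d33 (c lam x1 x2 x3 t : R) : R := Derive (fun y => tg_d3 c lam x1 x2 y t) x3.

(* Main.v *)
Require Import Defs.
From Stdlib Require Import Reals Factorial Lra Lia Field.
From Coquelicot Require Import Coquelicot.
Open Scope R_scope.

Section S.
Variable a : R.
Hypothesis ha : 0 < a.

Definition bb (k : nat) : R := (a / 2) ^ (2 * k + 1) / (INR (fact k) * INR (fact (S k))).

Lemma fact_nz k : INR (fact k) <> 0.
Proof. apply INR_fact_neq_0. Qed.

Lemma bb_rec k : bb (S k) = bb k * ((a/2)^2 / (INR (S k) * INR (S (S k)))).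
Proof.
  unfold bb.
  replace (2 * S k + 1)%nat with (2 * k + 1 + 2)%nat by lia.
  rewrite pow_add.
  change (fact (S (S k))) with (S (S k) * fact (S k))%nat.
  change (fact (S k)) with (S k * fact k)%nat.
  rewrite !mult_INR.
  field; repeat split; try apply fact_nz; apply not_0_INR; lia.
Qed.

Lemma bb_nz k : bb k <> 0.
Proof.
  unfold bb. apply Rmult_integral_contrapositive; split.
  apply pow_nonzero; lra.
  apply Rinv_neq_0_compat, Rmult_integral_contrapositive; split; apply fact_nz.
Qed.

Lemma bb_radius : CV_radius bb = p_infty.
Proof.
  apply CV_radius_infinite_DAlembert. apply bb_nz.
  apply is_lim_seq_ext with (fun n => (a/2)^2 * / (INR (S n) * INR (S (S n)))).
  { intros n. rewrite bb_rec. rewrite Rabs_right.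
    - field; repeat split; try apply bb_nz; apply not_0_INR; lia.
    - replace (bb n * ((a / 2) ^ 2 / (INR (S n) * INR (S (S n)))) / bb n)
        with ((a / 2) ^ 2 / (INR (S n) * INR (S (S n)))) by (field; repeat split; try apply bb_nz; apply not_0_INR; lia).
      apply Rle_ge. apply Rmult_le_pos. apply pow_le; lra.
      apply Rlt_le, Rinv_0_lt_compat, Rmult_lt_0_compat; apply lt_0_INR; lia. }
  replace (Finite 0) with (Rbar_mult ((a/2)^2) 0) by (simpl; f_equal; ring).
  apply is_lim_seq_scal_l.
  replace (Finite 0) with (Rbar_inv p_infty) by reflexivity.
  apply is_lim_seq_inv; [| discriminate].
  apply (is_lim_seq_mult _ _ p_infty p_infty).
  - apply (is_lim_seq_incr_1 INR). apply is_lim_seq_INR.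
  - apply (is_lim_seq_incr_1 (fun n => INR (S n))). apply (is_lim_seq_incr_1 INR). apply is_lim_seq_INR.
  - simpl. reflexivity.
Qed.

Definition d1 := PS_derive bb.
Definition d2 := PS_derive d1.
Definition g := PSeries bb.
Definition g1 := PSeries d1.
Definition g2 := PSeries d2.

Lemma d1_radius : CV_radius d1 = p_infty.
Proof. unfold d1. rewrite CV_radius_derive. apply bb_radius. Qed.
Lemma d2_radius : CV_radius d2 = p_infty.
Proof. unfold d2. rewrite CV_radius_derive. apply d1_radius. Qed.

Lemma g_der s : is_derive g s (g1 s).
Proof. apply is_derive_PSeries. rewrite bb_radius. simpl. trivial. Qed.
Lemma g1_der s : is_derive g1 s (g2 s).
Proof. apply is_derive_PSeries. rewrite d1_radius. simpl. trivial. Qed.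

Lemma ode s : 4 * s * g2 s + 8 * g1 s = a ^ 2 * g s.
Proof.
  unfold g, g1, g2.
  rewrite Rmult_assoc, <- PSeries_incr_1, <- !PSeries_scal.
  rewrite <- PSeries_plus.
  2: { apply CV_radius_inside. rewrite CV_radius_scal by lra.
       rewrite CV_radius_incr_1, d2_radius. simpl; trivial. }
  2: { apply CV_radius_inside. rewrite CV_radius_scal by lra.
       rewrite d1_radius. simpl; trivial. }
  apply PSeries_ext. intros n.
  unfold PS_plus, PS_scal, PS_incr_1, d2, d1, PS_derive.
  unfold plus, scal, zero; cbn -[INR]; unfold mult; cbn -[INR].
  destruct n as [|m].
  - rewrite bb_rec. simpl. field.
  - rewrite (bb_rec (S m)). rewrite !S_INR. field. pose proof (pos_INR m). split; lra.
Qed.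

Lemma core_eq s : 0 < s -> / sqrt s * bessel_I1 (a * sqrt s) = g s.
Proof.
  intros hs. unfold bessel_I1, g, PSeries.
  assert (hq : 0 < sqrt s) by (apply sqrt_lt_R0; lra).
  rewrite (Series_ext _ (fun k => sqrt s * (bb k * s ^ k))).
  - rewrite Series_scal_l. field. lra.
  - intros k. unfold bb.
    replace (a * sqrt s / 2) with ((a/2) * sqrt s) by field.
    rewrite Rpow_mult_distr, (pow_add (sqrt s)), (pow_mult (sqrt s)), pow2_sqrt by lra.
    field. split; apply fact_nz.
Qed.
End S.

Lemma Dg a s : 0 < a -> Derive (fun y => g a y) s = g1 a s.
Proof. intros; apply is_derive_unique, g_der; auto. Qed.
Lemma Dg1 a s : 0 < a -> Derive (fun y => g1 a y) s = g2 a s.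
Proof. intros; apply is_derive_unique, g1_der; auto. Qed.
Lemma exg a s : 0 < a -> ex_derive (fun y => g a y) s.
Proof. intros; eexists; apply g_der; auto. Qed.
Lemma exg1 a s : 0 < a -> ex_derive (fun y => g1 a y) s.
Proof. intros; eexists; apply g1_der; auto. Qed.

Lemma loc_pos (f : R -> R) x : continuous f x -> 0 < f x -> locally x (fun y => 0 < f y).
Proof.
  intros Hc Hp. apply Hc. exists (mkposreal _ Hp). intros y Hy.
  change (Rabs (y - f x) < f x) in Hy. apply Rabs_def2 in Hy. simpl in *. lra.
Qed.

Definition core (c lam s : R) := / sqrt s * bessel_I1 (lam / c * sqrt s).
Definition MM (c lam z : R) := exp (- lam * z) / PI * (lam / (2 * c)) ^ 2.

Lemma xdir1 c lam (hc : 0 < c) (hl : 0 < lam) M P y : 0 < P - y ^ 2 ->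
  is_derive (fun z => M * core c lam (P - z ^ 2)) y (M * (-2 * y * g1 (lam/c) (P - y ^ 2))).
Proof.
  intros hp. assert (ha : 0 < lam / c) by (apply Rdiv_lt_0_compat; auto).
  apply is_derive_ext_loc with (fun z => M * g (lam/c) (P - z ^ 2)).
  { assert (H := loc_pos (fun z => P - z ^ 2) y).
    assert (Hc : continuous (fun z => P - z ^ 2) y).
    { apply (ex_derive_continuous (fun z => P - z ^ 2)). auto_derive. auto. }
    specialize (H Hc hp). revert H. apply filter_imp. intros z hz.
    unfold core. rewrite core_eq; auto. }
  auto_derive. apply exg; auto. rewrite Dg by auto.
  replace (P + - (y*(y*1))) with (P - y^2) by ring. ring.
Qed.

Lemma locQ (f : R -> R) (x : R) : ex_derive f x -> 0 < f x -> locally x (fun y => 0 < f y).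
Proof. intros H1 H2. apply loc_pos; auto. apply (ex_derive_continuous f x); auto. Qed.

Lemma xdir2 c lam (hc : 0 < c) (hl : 0 < lam) M P y : 0 < P - y ^ 2 ->
  is_derive (fun z => Derive (fun w => M * core c lam (P - w ^ 2)) z) y
    (M * (-2 * g1 (lam/c) (P - y ^ 2) + 4 * y ^ 2 * g2 (lam/c) (P - y ^ 2))).
Proof.
  intros hp. assert (ha : 0 < lam / c) by (apply Rdiv_lt_0_compat; auto).
  apply is_derive_ext_loc with (fun z => M * (-2 * z * g1 (lam/c) (P - z ^ 2))).
  { assert (H := locQ (fun z => P - z ^ 2) y). 
    assert (He : ex_derive (fun z => P - z ^ 2) y) by (auto_derive; auto).
    specialize (H He hp). revert H. apply filter_imp. intros z hz.
    symmetry. apply is_derive_unique. apply xdir1; auto. }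
  auto_derive. apply exg1; auto. rewrite Dg1 by auto.
  replace (P + - (y*(y*1))) with (P - y^2) by ring. ring.
Qed.

Lemma tdir1 c lam (hc : 0 < c) (hl : 0 < lam) R0 t : 0 < c^2*t^2 - R0 ->
  is_derive (fun z => MM c lam z * core c lam (c^2*z^2 - R0)) t
    (MM c lam t * (- lam * g (lam/c) (c^2*t^2 - R0) + 2 * c^2 * t * g1 (lam/c) (c^2*t^2 - R0))).
Proof.
  intros hp. assert (ha : 0 < lam / c) by (apply Rdiv_lt_0_compat; auto).
  apply is_derive_ext_loc with (fun z => MM c lam z * g (lam/c) (c^2*z^2 - R0)).
  { assert (H := locQ (fun z => c^2*z^2 - R0) t). 
    assert (He : ex_derive (fun z => c^2*z^2 - R0) t) by (auto_derive; auto).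
    specialize (H He hp). revert H. apply filter_imp. intros z hz.
    unfold core. rewrite core_eq; auto. }
  unfold MM. auto_derive. apply exg; auto. rewrite Dg by auto.
  replace (c * (c * 1) * (t * (t * 1)) + - R0) with (c ^ 2 * t ^ 2 - R0) by ring.
  unfold Rdiv. ring.
Qed.

Lemma tdir2 c lam (hc : 0 < c) (hl : 0 < lam) R0 t : 0 < c^2*t^2 - R0 ->
  is_derive (fun z => Derive (fun w => MM c lam w * core c lam (c^2*w^2 - R0)) z) t
    (MM c lam t * (lam^2 * g (lam/c) (c^2*t^2 - R0) - 4 * lam * c^2 * t * g1 (lam/c) (c^2*t^2 - R0)
       + 2 * c^2 * g1 (lam/c) (c^2*t^2 - R0) + 4 * c^4 * t^2 * g2 (lam/c) (c^2*t^2 - R0))).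
Proof.
  intros hp. assert (ha : 0 < lam / c) by (apply Rdiv_lt_0_compat; auto).
  apply is_derive_ext_loc with (fun z => MM c lam z * (- lam * g (lam/c) (c^2*z^2 - R0) + 2 * c^2 * z * g1 (lam/c) (c^2*z^2 - R0))).
  { assert (H := locQ (fun z => c^2*z^2 - R0) t). 
    assert (He : ex_derive (fun z => c^2*z^2 - R0) t) by (auto_derive; auto).
    specialize (H He hp). revert H. apply filter_imp. intros z hz.
    symmetry. apply is_derive_unique. apply tdir1; auto. }
  unfold MM. auto_derive. repeat split; auto. apply exg; auto. apply exg1; auto.
  rewrite Dg, Dg1 by auto.
  replace (c * (c * 1) * (t * (t * 1)) + - R0) with (c ^ 2 * t ^ 2 - R0) by ring.
  unfold Rdiv. ring.
Qed.



Lemma tg_u_eq c lam x1 x2 x3 t :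
  tg_u c lam x1 x2 x3 t = MM c lam t * core c lam (c^2*t^2 - (x1^2+x2^2+x3^2)).
Proof.
  unfold tg_u, MM, core, norm3.
  rewrite pow2_sqrt by (assert (0 <= x1^2) by apply pow2_ge_0; assert (0 <= x2^2) by apply pow2_ge_0;
    assert (0 <= x3^2) by apply pow2_ge_0; lra).
  ring.
Qed.

Theorem theorem4p1 (c lam : R) (hc : 0 < c) (hlam : 0 < lam)
  (x1 x2 x3 t : R) (ht : 0 < t) (hx : norm3 x1 x2 x3 < c * t) :
  (* all partial derivatives involved exist *)
  ex_derive (fun s => tg_u c lam x1 x2 x3 s) t /\
  ex_derive (fun s => tg_dt c lam x1 x2 x3 s) t /\
  ex_derive (fun y => tg_u c lam y x2 x3 t) x1 /\
  ex_derive (fun y => tg_d1 c lam y x2 x3 t) x1 /\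
  ex_derive (fun y => tg_u c lam x1 y x3 t) x2 /\
  ex_derive (fun y => tg_d2 c lam x1 y x3 t) x2 /\
  ex_derive (fun y => tg_u c lam x1 x2 y t) x3 /\
  ex_derive (fun y => tg_d3 c lam x1 x2 y t) x3 /\
  (* the telegraph equation *)
  tg_dtt c lam x1 x2 x3 t + 2 * lam * tg_dt c lam x1 x2 x3 t
  - c ^ 2 * (tg_d11 c lam x1 x2 x3 t + tg_d22 c lam x1 x2 x3 t + tg_d33 c lam x1 x2 x3 t) = 0.
Proof.
  set (R0 := x1^2+x2^2+x3^2).
  set (S := c^2*t^2 - R0).
  assert (hS : 0 < S).
  { unfold S, R0. unfold norm3 in hx.
    assert (h0 : 0 <= x1^2+x2^2+x3^2) by (pose proof (pow2_ge_0 x1); pose proof (pow2_ge_0 x2); pose proof (pow2_ge_0 x3); lra).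
    assert (0 <= sqrt (x1^2+x2^2+x3^2)) by apply sqrt_pos.
    assert (sqrt (x1^2+x2^2+x3^2) * sqrt (x1^2+x2^2+x3^2) = x1^2+x2^2+x3^2) by (apply sqrt_sqrt; auto).
    nra. }
  set (P1 := c^2*t^2 - (x2^2+x3^2)).
  set (P2 := c^2*t^2 - (x1^2+x3^2)).
  set (P3 := c^2*t^2 - (x1^2+x2^2)).
  assert (e1 : P1 - x1^2 = S) by (unfold P1, S, R0; ring).
  assert (e2 : P2 - x2^2 = S) by (unfold P2, S, R0; ring).
  assert (e3 : P3 - x3^2 = S) by (unfold P3, S, R0; ring).
  set (M := MM c lam t).
  assert (Ut : forall s, tg_u c lam x1 x2 x3 s = MM c lam s * core c lam (c^2*s^2 - R0))
    by (intros; apply tg_u_eq).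
  assert (U1 : forall y, tg_u c lam y x2 x3 t = M * core c lam (P1 - y^2))
    by (intros; rewrite tg_u_eq; unfold M, P1; f_equal; f_equal; ring).
  assert (U2 : forall y, tg_u c lam x1 y x3 t = M * core c lam (P2 - y^2))
    by (intros; rewrite tg_u_eq; unfold M, P2; f_equal; f_equal; ring).
  assert (U3 : forall y, tg_u c lam x1 x2 y t = M * core c lam (P3 - y^2))
    by (intros; rewrite tg_u_eq; unfold M, P3; f_equal; f_equal; ring).
  assert (Dt : forall s, tg_dt c lam x1 x2 x3 s = Derive (fun w => MM c lam w * core c lam (c^2*w^2 - R0)) s)
    by (intros; unfold tg_dt; apply Derive_ext; auto).
  assert (D1 : forall y, tg_d1 c lam y x2 x3 t = Derive (fun w => M * core c lam (P1 - w^2)) y)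
    by (intros; unfold tg_d1; apply Derive_ext; auto).
  assert (D2 : forall y, tg_d2 c lam x1 y x3 t = Derive (fun w => M * core c lam (P2 - w^2)) y)
    by (intros; unfold tg_d2; apply Derive_ext; auto).
  assert (D3 : forall y, tg_d3 c lam x1 x2 y t = Derive (fun w => M * core c lam (P3 - w^2)) y)
    by (intros; unfold tg_d3; apply Derive_ext; auto).
  assert (hS1 : 0 < P1 - x1^2) by lra.
  assert (hS2 : 0 < P2 - x2^2) by lra.
  assert (hS3 : 0 < P3 - x3^2) by lra.
  pose proof (tdir1 c lam hc hlam R0 t hS) as T1.
  pose proof (tdir2 c lam hc hlam R0 t hS) as T2.
  pose proof (xdir1 c lam hc hlam M P1 x1 hS1) as X11.
  pose proof (xdir2 c lam hc hlam M P1 x1 hS1) as X12.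
  pose proof (xdir1 c lam hc hlam M P2 x2 hS2) as X21.
  pose proof (xdir2 c lam hc hlam M P2 x2 hS2) as X22.
  pose proof (xdir1 c lam hc hlam M P3 x3 hS3) as X31.
  pose proof (xdir2 c lam hc hlam M P3 x3 hS3) as X32.
  split. { eexists. eapply is_derive_ext; [|exact T1]. intros; simpl; symmetry; auto. }
  split. { eexists. eapply is_derive_ext; [|exact T2]. intros; simpl; symmetry; auto. }
  split. { eexists. eapply is_derive_ext; [|exact X11]. intros; simpl; symmetry; auto. }
  split. { eexists. eapply is_derive_ext; [|exact X12]. intros; simpl; symmetry; auto. }
  split. { eexists. eapply is_derive_ext; [|exact X21]. intros; simpl; symmetry; auto. }
  split. { eexists. eapply is_derive_ext; [|exact X22]. intros; simpl; symmetry; auto. }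
  split. { eexists. eapply is_derive_ext; [|exact X31]. intros; simpl; symmetry; auto. }
  split. { eexists. eapply is_derive_ext; [|exact X32]. intros; simpl; symmetry; auto. }
  assert (V0 : tg_dt c lam x1 x2 x3 t = MM c lam t * (- lam * g (lam/c) (c^2*t^2 - R0) + 2 * c^2 * t * g1 (lam/c) (c^2*t^2 - R0))).
  { rewrite Dt. apply is_derive_unique. exact T1. }
  assert (V1 : tg_dtt c lam x1 x2 x3 t = MM c lam t * (lam^2 * g (lam/c) (c^2*t^2 - R0) - 4 * lam * c^2 * t * g1 (lam/c) (c^2*t^2 - R0)
       + 2 * c^2 * g1 (lam/c) (c^2*t^2 - R0) + 4 * c^4 * t^2 * g2 (lam/c) (c^2*t^2 - R0))).
  { unfold tg_dtt. apply is_derive_unique. eapply is_derive_ext; [|exact T2]. intros; simpl; symmetry; auto. }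
  assert (W1 : tg_d11 c lam x1 x2 x3 t = M * (-2 * g1 (lam/c) (P1 - x1 ^ 2) + 4 * x1 ^ 2 * g2 (lam/c) (P1 - x1 ^ 2))).
  { unfold tg_d11. apply is_derive_unique. eapply is_derive_ext; [|exact X12]. intros; simpl; symmetry; auto. }
  assert (W2 : tg_d22 c lam x1 x2 x3 t = M * (-2 * g1 (lam/c) (P2 - x2 ^ 2) + 4 * x2 ^ 2 * g2 (lam/c) (P2 - x2 ^ 2))).
  { unfold tg_d22. apply is_derive_unique. eapply is_derive_ext; [|exact X22]. intros; simpl; symmetry; auto. }
  assert (W3 : tg_d33 c lam x1 x2 x3 t = M * (-2 * g1 (lam/c) (P3 - x3 ^ 2) + 4 * x3 ^ 2 * g2 (lam/c) (P3 - x3 ^ 2))).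
  { unfold tg_d33. apply is_derive_unique. eapply is_derive_ext; [|exact X32]. intros; simpl; symmetry; auto. }
  rewrite V0, V1, W1, W2, W3.
  rewrite e1, e2, e3. fold S. fold M.
  assert (ha : 0 < lam / c) by (apply Rdiv_lt_0_compat; auto).
  pose proof (ode (lam/c) ha S) as HO.
  transitivity (M * (c^2 * (4 * S * g2 (lam/c) S + 8 * g1 (lam/c) S) - lam^2 * g (lam/c) S)).
  - clear - hc. unfold S, R0. ring.
  - rewrite HO. field. lra.
Qed.
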